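(* Let $n$ be a positive integer. Then, modulo $\Phi_n(q)^2$, \[ \sum_{k=0}^{n-1}\frac{(q;q^2)_k^2(q^2;q^4)_k}{(q^2;q^2)_k^2(q^4;q^4)_k}\,q^{2k} \equiv q^{(n-1)/2}\frac{(q^2;q^4)_{(n-1)/4}^2}{(q^4;q^4)_{(n-1)/4}^2}\quad\text{if } n\equiv 1\pmod 4, \] and \[ \sum_{k=0}^{n-1}\frac{(q;q^2)_k^2(q^2;q^4)_k}{(q^2;q^2)_k^2(q^4;q^4)_k}\,q^{2k}\equiv 0\quad\text{if } n\equiv 3\pmod 4. \]
   Context: For an indeterminate $a$ and a nonnegative integer $k$, $(a;q)_k=\prod_{j=0}^{k-1}(1-aq^j)$, with $(a;q)_0=1$. $\Phi_n(q)=\prod_{1\le j\le n,\ \gcd(j,n)=1}(q-e^{2\pi i j/n})$ is the $n$-th cyclotomic polynomial. A congruence between rational functions in $q$ modulo a polynomial $P(q)$ means that the difference, written as a ratio of polynomials with denominator coprime to $P(q)$, has numerator divisible by $P(q)$. *)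

(* Defs.v *)
From HB Require Import structures.
From mathcomp Require Import all_boot all_order all_algebra all_field.
Set Implicit Arguments. Unset Strict Implicit. Unset Printing Implicit Defensive.
Import Order.TTheory GRing.Theory Num.Theory.
Local Open Scope ring_scope.

Notation "x %:F" := (@FracField.tofrac _ x) : ring_scope.
Notation RF := {fraction {poly rat}}.

Definition qq : RF := ('X : {poly rat})%:F.

Definition qpoch (R : ringType) (a p : R) (k : nat) : R :=
  \prod_(j < k) (1 - a * p ^+ j).

Definition PhiQ (n : nat) : {poly rat} := map_poly intr ('Phi_n).

Definition qcong (f g : RF) (P : {poly rat}) : Prop :=
  exists A B : {poly rat},
    [/\ B != 0, coprimep B P, P %| A & f - g = A%:F / B%:F].

(* Main.v *)
Require Import Defs.
From HB Require Import structures.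
From mathcomp Require Import all_boot all_order all_algebra all_field.
From mathcomp Require Import ring zify.
Set Implicit Arguments. Unset Strict Implicit. Unset Printing Implicit Defensive.
Import Order.TTheory GRing.Theory Num.Theory.
Local Open Scope ring_scope.

Section Watson.
Variables (K : fieldType) (p : K).
Hypothesis hp0 : p != 0.
Hypothesis hp1 : forall j, (0 < j)%N -> p ^+ j != 1.

Lemma pX0 j : p ^+ j != 0. Proof. by rewrite expf_neq0. Qed.
Lemma sub1X j : (0 < j)%N -> 1 - p ^+ j != 0.
Proof. by move=> h; rewrite subr_eq0 eq_sym hp1. Qed.

Lemma pXinj i j : p ^+ i = p ^+ j -> i = j.
Proof.
wlog le : i j / (i <= j)%N.
  by move=> W; case/orP: (leq_total i j) => h e; [apply: W|symmetry; apply: W].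
move=> e; rewrite -(subnKC le) exprD -{1}(mulr1 (p ^+ i)) in e.
move/(mulfI (pX0 i)): e => /esym e.
case: (posnP (j - i)) => h; first by lia.
by move: (hp1 h); rewrite e eqxx.
Qed.

Definition af N j := 1 - p ^+ j / p ^+ N.
Lemma af_neq0 N j : j != N -> af N j != 0.
Proof.
move=> h; rewrite /af subr_eq0; apply/eqP=> e.
have : p ^+ j = p ^+ N by rewrite -[p ^+ j](divfK (pX0 N)) -e mul1r.
by move/pXinj/eqP; rewrite (negbTE h).
Qed.

Definition bf N j := 1 - p ^+ (N.+1 + j).
Definition cf j := (1 - p ^+ (2 * j + 1)) * p /
   ((1 - p ^+ (j + 1)) ^+ 2 * (1 - p ^+ (2 * j + 2))).
Definition r N j := af N j * bf N j * cf j.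
Definition F N k := \prod_(j < k) r N j.
Definition A N k := \prod_(j < k) af N j.
Definition B N k := \prod_(j < k) bf N j.
Definition C k := \prod_(j < k) cf j.

Lemma FABC N k : F N k = A N k * B N k * C k.
Proof. by rewrite /F /r /A /B /C !big_split. Qed.

Lemma F0 N k : (N < k)%N -> F N k = 0.
Proof.
elim: k => // k IH; rewrite ltnS leq_eqVlt => /orP[/eqP<-|h];
  rewrite /F big_ord_recr /=.
  by rewrite /r /af divff ?pX0 // subrr !mul0r mulr0.
by rewrite -/(F N k) IH // mul0r.
Qed.

Lemma A_rel N k : A N.+2 k * (af N.+2 k * af N.+2 k.+1) =
  af N.+2 0 * af N.+2 1 * A N k.
Proof.
elim: k => [|k IH]; first by rewrite /A !big_ord0 mul1r mulr1.
have e : af N.+2 k.+2 = af N k.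
  rewrite /af !exprS; congr (1 - _); field.
  by rewrite hp0 pX0.
rewrite /A !big_ord_recr /= -/(A N k) -/(A N.+2 k) e.
transitivity (A N.+2 k * (af N.+2 k * af N.+2 k.+1) * af N k); first by ring.
by rewrite IH; ring.
Qed.

Lemma B_rel N k : B N k * (bf N k * bf N k.+1) =
  bf N 0 * bf N 1 * B N.+2 k.
Proof.
elim: k => [|k IH]; first by rewrite /B !big_ord0 mul1r mulr1.
have e : bf N k.+2 = bf N.+2 k.
  by rewrite /bf; congr (1 - p ^+ _); lia.
rewrite /B !big_ord_recr /= -/(B N k) -/(B N.+2 k).
transitivity (B N k * (bf N k * bf N k.+1) * bf N k.+2); first by ring.
by rewrite IH e; ring.
Qed.

Definition Rp N k := p ^+ 2 * p ^+ N * (1 - p ^+ 3 * (p ^+ N) ^+ 2) *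
  (p ^+ k - 1) ^+ 3 * (p ^+ k + 1) /
  (p ^+ k * (1 - p * p ^+ N * p ^+ k) * (1 - p ^+ 2 * p ^+ N * p ^+ k)).
Definition G N k := F N.+2 k * Rp N k.

Lemma tele N k : (1 - p ^+ N.+2) ^+ 2 * F N.+2 k
   - p * (1 - p ^+ N.+1) ^+ 2 * F N k = G N k.+1 - G N k.
Proof.
have FD : F N k * (af N.+2 0 * af N.+2 1 * (bf N k * bf N k.+1)) =
          F N.+2 k * (af N.+2 k * af N.+2 k.+1 * (bf N 0 * bf N 1)).
  rewrite !FABC.
  transitivity ((A N.+2 k * (af N.+2 k * af N.+2 k.+1)) * B N k * C k
    * (bf N k * bf N k.+1)); first by rewrite A_rel; ring.
  transitivity ((A N.+2 k * (af N.+2 k * af N.+2 k.+1)) *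
    (B N k * (bf N k * bf N k.+1)) * C k); first by ring.
  by rewrite B_rel; ring.
have Dn : af N.+2 0 * af N.+2 1 * (bf N k * bf N k.+1) != 0.
  by rewrite !mulf_neq0 ?af_neq0 ?/bf ?sub1X.
have -> : F N k = F N.+2 k * (af N.+2 k * af N.+2 k.+1 * (bf N 0 * bf N 1)) /
    (af N.+2 0 * af N.+2 1 * (bf N k * bf N k.+1)).
  by rewrite -FD mulfK.
rewrite /G.
have -> : F N.+2 k.+1 = F N.+2 k * r N.+2 k by rewrite /F big_ord_recr.
rewrite /r /af /bf /cf /Rp.
have e2k : forall m, p ^+ (2 * m) = (p ^+ m) ^+ 2 by move=> m; rewrite mulnC exprM.
rewrite !exprD ?e2k !exprS !expr0 ?addn0 ?add0n.
set x := p ^+ N; set y := p ^+ k; set f := F N.+2 k.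
have s1 : forall e m, e = p ^+ m -> (0 < m)%N -> 1 - e != 0.
  by move=> e m -> ; exact: sub1X.
have s2 : forall e m, e = p ^+ m -> (0 < m)%N -> e - 1 != 0.
  by move=> e m -> h; rewrite -opprB oppr_eq0 sub1X.
field.
rewrite /x /y.
repeat (apply/andP; split). all: try (by rewrite ?hp0 ?pX0).
- apply: (s1 _ (N+k+2)%N); last lia; rewrite !exprD; ring.
- apply: (s1 _ (N+k+1)%N); last lia; rewrite !exprD; ring.
- apply: (s1 _ (N+k+3)%N); last lia; rewrite !exprD; ring.
- apply: (s1 _ (2*k+2)%N); last lia; rewrite !exprD ?expr0; ring.
- apply: (s1 _ (k+1)%N); last lia; rewrite !exprD; ring.
- apply: (s2 _ (N+1)%N); last lia; rewrite !exprD; ring.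
- apply: (s2 _ (N+2)%N); last lia; rewrite !exprD; ring.
Qed.
Definition S N := \sum_(k < N.+1) F N k.

Lemma S3 N : \sum_(k < N.+3) F N k = S N.
Proof. by rewrite big_ord_recr /= big_ord_recr /= !F0 // !addr0. Qed.

Lemma rec N : (1 - p ^+ N.+2) ^+ 2 * S N.+2 = p * (1 - p ^+ N.+1) ^+ 2 * S N.
Proof.
have h := telescope_sumr (G N) (leq0n N.+3).
rewrite big_mkord in h.
have G0 : G N 0 = 0 by rewrite /G /Rp expr0 subrr expr0n /= !(mulr0, mul0r).
have G3 : G N N.+3 = 0 by rewrite /G F0 // mul0r.
rewrite G0 G3 subrr in h.
have h2 : \sum_(k < N.+3) ((1 - p ^+ N.+2) ^+ 2 * F N.+2 k
   - p * (1 - p ^+ N.+1) ^+ 2 * F N k) = 0.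
  by rewrite -[RHS]h; apply: eq_bigr => k _; exact: tele.
rewrite sumrB -!mulr_sumr S3 in h2.
by apply/eqP; rewrite -subr_eq0 h2.
Qed.

Definition V N := if odd N then 0 else p ^+ (N./2) *
  (\prod_(j < N./2) (1 - p ^+ (2 * j + 1))) ^+ 2 /
  (\prod_(j < N./2) (1 - p ^+ (2 * j + 2))) ^+ 2.

Lemma SV N : S N = V N.
Proof.
suff : S N = V N /\ S N.+1 = V N.+1 by case.
elim: N => [|N [IH1 IH2]].
  split.
    by rewrite /S /V big_ord1 /F big_ord0 /= !big_ord0 expr1n divr1 mulr1.
  rewrite /S /V /= big_ord_recr /= big_ord1 /F big_ord1 !big_ord0 /r /af /bf /cf.
  rewrite ?expr0 ?expr1 ?add0n ?addn0 ?mul1r ?muln0 ?add0n ?expr1.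
  have h1 : 1 - p != 0 by move: (@sub1X 1 isT); rewrite expr1.
  have h2 : 1 - p ^+ 2 != 0 by rewrite sub1X.
  field.
  by rewrite hp0 h1 h2.
split => //.
have hn : (1 - p ^+ N.+2) != 0 by rewrite sub1X.
apply: (mulfI (expf_neq0 2 hn)).
rewrite rec IH1 /V /=.
case: (boolP (odd N)) => oN; first by rewrite !mulr0.
rewrite !big_ord_recr /=.
have eN : (2 * N./2 = N)%N.
  by move: (odd_double_half N); rewrite (negbTE oN) add0n mul2n.
rewrite eN.
have P1 : \prod_(j < N./2) (1 - p ^+ (2 * j + 2)) != 0.
  by rewrite prodf_seq_neq0; apply/allP=> j _; rewrite sub1X // addn2.
rewrite addn1 addn2 [p ^+ N./2.+1]exprS.
move: P1; set Q1 := \prod_(j < N./2) _; set Q2 := \prod_(j < N./2) _ => P1.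
set z := p ^+ N./2.
field.
by rewrite P1 hn.
Qed.
End Watson.
Lemma PhiQ_dvd n : (0 < n)%N -> PhiQ n %| 1 - 'X^n.
Proof.
move=> hn.
have := prod_Cyclotomic hn.
rewrite (big_rem n) /=; last by rewrite -dvdn_divisors.
have eX : map_poly (intr : int -> rat) ('X^n - 1) = 'X^n - 1.
  by rewrite rmorphB rmorph1 /= map_polyXn.
move/(congr1 (map_poly (intr : int -> rat))).
rewrite eX rmorphM /= -/(PhiQ n) => e.
by rewrite -opprB dvdpNr -e dvdp_mulr.
Qed.

Lemma PhiQ_root0 n : (0 < n)%N -> ~~ root (PhiQ n) 0.
Proof.
move=> hn; apply/negP=> /(root_dvdp (PhiQ_dvd hn)).
by rewrite /root !hornerE expr0n /= (negbTE (lt0n_neq0 hn)) subr0 oner_eq0.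
Qed.

Lemma cop_X m n : (0 < n)%N -> coprimep ('X^m) (PhiQ n).
Proof.
move=> hn; apply: coprimep_expl; rewrite coprimep_sym -['X]subr0 -polyC0.
by rewrite coprimep_XsubC PhiQ_root0.
Qed.

Lemma cop_cyc n m : (0 < n)%N -> ~~ (n %| m)%N -> coprimep (1 - 'X^m) (PhiQ n).
Proof.
move=> hn hm.
have [z prim_z] := C_prim_root_exists hn.
rewrite -(coprimep_map (@ratr algC)).
have -> : map_poly ratr (PhiQ n) = cyclotomic z n.
  rewrite -(Cintr_Cyclotomic prim_z) /PhiQ -map_poly_comp.
  by apply: eq_map_poly => a /=; rewrite ratr_int.
rewrite /cyclotomic rmorphB rmorph1 /= map_polyXn.
apply: (big_ind (fun q => coprimep (1 - 'X^m) q)).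
- exact: coprimep1.
- by move=> a b ha hb; rewrite coprimepMr ha hb.
move=> k hk; rewrite coprimep_XsubC /root !hornerE subr_eq0 eq_sym.
have pk : n.-primitive_root (z ^+ k) by rewrite prim_root_exp_coprime.
by rewrite -(prim_order_dvd pk).
Qed.

Section Ideal.
Variable P : {poly rat}.
Definition integ (f : RF) := exists A B : {poly rat},
  [/\ B != 0, coprimep B P & f = A%:F / B%:F].
Definition good (f : RF) := exists A B : {poly rat},
  [/\ B != 0, coprimep B P, P %| A & f = A%:F / B%:F].

Lemma tofrac_neq0 (B : {poly rat}) : B != 0 -> B%:F != 0 :> RF.
Proof. by rewrite tofrac_eq0. Qed.

Lemma integ_poly (A : {poly rat}) : integ A%:F.
Proof. by exists A, 1; rewrite oner_eq0 coprime1p rmorph1 divr1. Qed.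

Lemma integ_invp (B : {poly rat}) : B != 0 -> coprimep B P -> integ (B%:F)^-1.
Proof. by move=> h1 h2; exists 1, B; rewrite rmorph1 div1r. Qed.

Lemma good_poly (A : {poly rat}) : P %| A -> good A%:F.
Proof. by exists A, 1; rewrite oner_eq0 coprime1p rmorph1 divr1. Qed.

Lemma good_integ f : good f -> integ f.
Proof. by case=> A [B [h1 h2 h3 ->]]; exists A, B. Qed.

Lemma integ_mul f g : integ f -> integ g -> integ (f * g).
Proof.
case=> A1 [B1 [h1 h2 ->]]; case=> A2 [B2 [h3 h4 ->]].
exists (A1 * A2), (B1 * B2); rewrite mulf_neq0 // coprimepMl h2 h4; split => //.
by rewrite !rmorphM mulf_div.
Qed.

Lemma good_mul f g : good f -> integ g -> good (f * g).
Proof.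
case=> A1 [B1 [h1 h2 h5 ->]]; case=> A2 [B2 [h3 h4 ->]].
exists (A1 * A2), (B1 * B2); rewrite mulf_neq0 // coprimepMl h2 h4 dvdp_mulr //; split => //.
by rewrite !rmorphM mulf_div.
Qed.

Lemma integ_add f g : integ f -> integ g -> integ (f + g).
Proof.
case=> A1 [B1 [h1 h2 ->]]; case=> A2 [B2 [h3 h4 ->]].
exists (A1 * B2 + A2 * B1), (B1 * B2); rewrite mulf_neq0 // coprimepMl h2 h4; split => //.
by rewrite rmorphD !rmorphM addf_div ?tofrac_neq0.
Qed.

Lemma good_add f g : good f -> good g -> good (f + g).
Proof.
case=> A1 [B1 [h1 h2 h5 ->]]; case=> A2 [B2 [h3 h4 h6 ->]].
exists (A1 * B2 + A2 * B1), (B1 * B2); rewrite mulf_neq0 // coprimepMl h2 h4.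
rewrite dvdp_add ?dvdp_mulr //; split => //.
by rewrite rmorphD !rmorphM addf_div ?tofrac_neq0.
Qed.

Lemma integ1 : integ 1.
Proof. by have := integ_poly 1; rewrite rmorph1. Qed.

Lemma good0 : good 0.
Proof. by exists 0, 1; rewrite oner_eq0 coprime1p dvdp0 rmorph0 mul0r. Qed.

Lemma integ_opp f : integ f -> integ (- f).
Proof.
move=> h; rewrite -mulN1r; apply: integ_mul h.
by have := integ_poly (-1); rewrite rmorphN rmorph1.
Qed.

Lemma good_sum m (f : nat -> RF) : (forall i, (i < m)%N -> good (f i)) ->
  good (\sum_(i < m) f i).
Proof.
elim: m => [|m IH] h; first by rewrite big_ord0; exact: good0.
rewrite big_ord_recr /=; apply: good_add; last exact: h.
by apply: IH => i hi; apply: h; rewrite ltnS ltnW.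
Qed.

Lemma integ_prod m (f : nat -> RF) : (forall i, (i < m)%N -> integ (f i)) ->
  integ (\prod_(i < m) f i).
Proof.
elim: m => [|m IH] h; first by rewrite big_ord0; exact: integ1.
rewrite big_ord_recr /=; apply: integ_mul; last exact: h.
by apply: IH => i hi; apply: h; rewrite ltnS ltnW.
Qed.

Lemma good_prod_diff m (u v : nat -> RF) :
  (forall i, (i < m)%N -> [/\ integ (u i), integ (v i) & good (u i - v i)]) ->
  good (\prod_(i < m) u i - \prod_(i < m) v i).
Proof.
elim: m => [|m IH] h; first by rewrite !big_ord0 subrr; exact: good0.
have h' : forall i, (i < m)%N -> [/\ integ (u i), integ (v i) & good (u i - v i)].
  by move=> i hi; apply: h; rewrite ltnS ltnW.
have [hu hv hd] := h m (ltnSn m).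
rewrite !big_ord_recr /=.
have -> : \prod_(i < m) u i * u m - \prod_(i < m) v i * v m =
  (\prod_(i < m) u i - \prod_(i < m) v i) * u m + \prod_(i < m) v i * (u m - v m).
  by rewrite mulrBl mulrBr addrA subrK.
apply: good_add; first by apply: good_mul => //; exact: IH.
rewrite mulrC; apply: good_mul => //; apply: integ_prod => i hi.
by case: (h' i hi).
Qed.
End Ideal.

Section Gen.
Variables (K : fieldType) (q : K).
Hypothesis hq0 : q != 0.
Hypothesis hq1 : forall j, (0 < j)%N -> q ^+ j != 1.

Lemma hp0 : q ^+ 2 != 0. Proof. by rewrite expf_neq0. Qed.
Lemma hp1 j : (0 < j)%N -> (q ^+ 2) ^+ j != 1.
Proof. by move=> h; rewrite -exprM hq1 // muln_gt0. Qed.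

Definition sig j := (1 - q * (q ^+ 2) ^+ j) ^+ 2 * (1 - q ^+ 2 * (q ^+ 4) ^+ j) /
   ((1 - q ^+ 2 * (q ^+ 2) ^+ j) ^+ 2 * (1 - q ^+ 4 * (q ^+ 4) ^+ j)) * q ^+ 2.

Lemma s_prod k :
  (qpoch q (q ^+ 2) k ^+ 2 * qpoch (q ^+ 2) (q ^+ 4) k) /
      (qpoch (q ^+ 2) (q ^+ 2) k ^+ 2 * qpoch (q ^+ 4) (q ^+ 4) k)
      * q ^+ (2 * k) = \prod_(j < k) sig j.
Proof.
rewrite /sig /qpoch big_split /= prodf_div !big_split /=.
by rewrite prodr_const card_ord -exprD addnn -mul2n !expr2.
Qed.

Lemma sig_eq j : sig j = (1 - q ^+ (2 * j + 1)) ^+ 2 * cf (q ^+ 2) j.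
Proof.
rewrite /sig /cf -!exprM -!exprD -exprS.
have -> : ((2 * j).+1 = 2 * j + 1)%N by lia.
have -> : (2 + 4 * j = 2 * (2 * j + 1))%N by lia.
have -> : (2 + 2 * j = 2 * (j + 1))%N by lia.
have -> : (4 + 4 * j = 2 * (2 * j + 2))%N by lia.
have s1 := sub1X hq1.
have e1 : forall a b, (a = b)%N -> 1 - q ^+ a = 1 - q ^+ b by move=> a b ->.
set a := q ^+ (2 * j + 1); set b := q ^+ (2 * (2 * j + 1)).
set c := q ^+ (2 * (j + 1)); set d := q ^+ (2 * (2 * j + 2)).
have hc : 1 - c != 0 by rewrite /c s1 //; lia.
have hd : 1 - d != 0 by rewrite /d s1 //; lia.
field. by rewrite hc hd.
Qed.

Lemma udiff N j : (1 - q ^+ (2 * j + 1)%N) ^+ 2 - af (q ^+ 2) N j * bf (q ^+ 2) N j =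
  q ^+ (2 * j + 1)%N * (1 - q ^+ (2 * N + 1)%N) ^+ 2 / q ^+ (2 * N + 1)%N.
Proof.
have e2 : forall m, q ^+ (2 * m)%N = (q ^+ m) ^+ 2 by move=> m; rewrite mulnC exprM.
rewrite /af /bf -!exprM !e2 !exprD ?expr0 ?expr1 ?exprS.
have hw : q ^+ N != 0 by rewrite expf_neq0.
set t := q ^+ j; set w := q ^+ N.
field.
by rewrite hq0 hw.
Qed.
End Gen.

Lemma qqE m : (('X^m : {poly rat})%:F : RF) = qq ^+ m.
Proof. by rewrite rmorphXn. Qed.

Lemma qq0 : qq != 0.
Proof. by rewrite /qq tofrac_eq0 polyX_eq0. Qed.

Lemma qq1 j : (0 < j)%N -> qq ^+ j != 1.
Proof.
move=> hj; rewrite -qqE -(rmorph1 (@tofrac _)) tofrac_eq.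
apply/eqP => h; have := congr1 (fun r : {poly rat} => size r) h; rewrite /= size_polyXn size_poly1.
by case=> e; rewrite e in hj.
Qed.

Lemma qpE m : ((qq ^+ 2) ^+ m : RF) = ('X^(2 * m))%:F.
Proof. by rewrite qqE exprM. Qed.

Section Main.
Variable n : nat.
Hypothesis hn0 : (0 < n)%N.
Hypothesis hodd : odd n.
Let P := PhiQ n ^+ 2.

Lemma copP B : coprimep B (PhiQ n) -> coprimep B P.
Proof. by move=> h; rewrite /P coprimep_pexpr. Qed.

Lemma integ_1p m : integ P (1 - (qq ^+ 2) ^+ m).
Proof. by have := integ_poly P (1 - 'X^(2 * m)); rewrite rmorphB rmorph1 /= -qpE. Qed.

Lemma integ_p : integ P (qq ^+ 2).
Proof. by have := integ_poly P ('X^2); rewrite qqE. Qed.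

Lemma integ_inv1p m : ~~ (n %| 2 * m)%N -> integ P ((1 - (qq ^+ 2) ^+ m)^-1).
Proof.
move=> h.
have hm : (0 < m)%N by case: m h => // ; rewrite muln0 dvdn0.
have := @integ_invp P (1 - 'X^(2 * m)).
rewrite rmorphB rmorph1 /= -qpE; apply.
  by rewrite -tofrac_eq0 rmorphB rmorph1 /= -qpE (sub1X (@hp1 _ _ qq1)).
by apply: copP; apply: cop_cyc.
Qed.

Lemma ndvd i : (i.+1 < n)%N -> ~~ (n %| 2 * (i + 1))%N /\ ~~ (n %| 2 * (2 * i + 2))%N.
Proof.
move=> hi.
have c2 : coprime n 2 by rewrite coprime_sym coprime2n.
have h1 : ~~ (n %| i + 1)%N.
  apply/negP => /dvdn_leq h; have : (n <= i + 1)%N by apply: h; lia.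
  lia.
split; first by rewrite Gauss_dvdr.
have -> : (2 * (2 * i + 2) = 2 * (2 * (i + 1)))%N by lia.
by rewrite !Gauss_dvdr.
Qed.

Lemma integ_cf i : (i.+1 < n)%N -> integ P (cf (qq ^+ 2) i).
Proof.
move=> hi; have [h1 h2] := ndvd hi.
rewrite /cf invfM -exprVn expr2.
apply: integ_mul; first by apply: integ_mul; [exact: integ_1p | exact: integ_p].
apply: integ_mul; first by apply: integ_mul; apply: integ_inv1p.
by apply: integ_inv1p.
Qed.

Lemma good_ud N i : n = (2 * N + 1)%N ->
  good P ((1 - qq ^+ (2 * i + 1)%N) ^+ 2 - af (qq ^+ 2) N i * bf (qq ^+ 2) N i).
Proof.
move=> hN; rewrite (udiff qq0) -hN.
apply: good_mul.
  have := @good_poly P ('X^(2 * i + 1) * (1 - 'X^n) ^+ 2).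
  rewrite rmorphM /= qqE rmorphXn rmorphB rmorph1 /= qqE; apply.
  by apply: dvdp_mull; rewrite /P dvdp_exp2r // PhiQ_dvd.
have := @integ_invp P ('X^n); rewrite qqE; apply.
  by rewrite -size_poly_eq0 size_polyXn.
by apply: copP; apply: cop_X.
Qed.

End Main.

Lemma key (n : nat) (hn : (0 < n)%N) (hodd : odd n) :
  good (PhiQ n ^+ 2)
    (\sum_(k < n)
      (qpoch qq (qq ^+ 2) k ^+ 2 * qpoch (qq ^+ 2) (qq ^+ 4) k) /
      (qpoch (qq ^+ 2) (qq ^+ 2) k ^+ 2 * qpoch (qq ^+ 4) (qq ^+ 4) k)
      * qq ^+ (2 * k) - V (qq ^+ 2) ((n - 1) %/ 2)).
Proof.
set N := ((n - 1) %/ 2)%N.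
have hN : n = (2 * N + 1)%N.
  have : (n %% 2 = 1)%N by rewrite modn2 hodd.
  rewrite /N; lia.
have hp0' := @hp0 _ _ qq0.
have hp1' := @hp1 _ _ qq1.
rewrite -(SV hp0' hp1').
have -> : S (qq ^+ 2) N = \sum_(k < n) F (qq ^+ 2) N k.
  have : (N < n)%N by lia.
  clearbody N; clear -hp0'.
  elim: n => // m IH hm.
  rewrite big_ord_recr /=.
  case: (ltnP N m) => h; first by rewrite -IH // F0 // addr0.
  have -> : m = N by lia.
  by rewrite /S big_ord_recr.
under eq_bigr => k _ do rewrite s_prod.
rewrite -sumrB.
apply: (good_sum (f := fun k => \prod_(j < k) sig qq j - F (qq ^+ 2) N k)) => k hk.
rewrite /F; apply: (good_prod_diff (u := sig qq) (v := r (qq ^+ 2) N)) => i hi.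
have hi1 : (i.+1 < n)%N by lia.
have hu : integ (PhiQ n ^+ 2) ((1 - qq ^+ (2 * i + 1)%N) ^+ 2).
  by have := integ_poly (PhiQ n ^+ 2) ((1 - 'X^(2 * i + 1)) ^+ 2);
    rewrite rmorphXn rmorphB rmorph1 /= qqE.
have hd : good (PhiQ n ^+ 2) ((1 - qq ^+ (2 * i + 1)%N) ^+ 2 - af (qq ^+ 2) N i * bf (qq ^+ 2) N i).
  exact: good_ud.
have hc : integ (PhiQ n ^+ 2) (cf (qq ^+ 2) i) by exact: integ_cf.
have hab : integ (PhiQ n ^+ 2) (af (qq ^+ 2) N i * bf (qq ^+ 2) N i).
  have -> : af (qq ^+ 2) N i * bf (qq ^+ 2) N i =
    (1 - qq ^+ (2 * i + 1)%N) ^+ 2 - ((1 - qq ^+ (2 * i + 1)%N) ^+ 2 - af (qq ^+ 2) N i * bf (qq ^+ 2) N i).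
    by rewrite opprB addrC subrK.
  by apply: integ_add hu (integ_opp (good_integ hd)).
rewrite (sig_eq qq0 qq1) /r.
split.
- exact: integ_mul hu hc.
- exact: integ_mul hab hc.
- by rewrite -mulrBl; apply: good_mul.
Qed.

Unset Implicit Arguments.

Theorem theorem2 (n : nat) (hn : (0 < n)%N) :
  let S := \sum_(k < n)
      (qpoch qq (qq ^+ 2) k ^+ 2 * qpoch (qq ^+ 2) (qq ^+ 4) k) /
      (qpoch (qq ^+ 2) (qq ^+ 2) k ^+ 2 * qpoch (qq ^+ 4) (qq ^+ 4) k)
      * qq ^+ (2 * k) in
  ((n %% 4 = 1)%N ->
     qcong S (qq ^+ ((n - 1) %/ 2) *
              (qpoch (qq ^+ 2) (qq ^+ 4) ((n - 1) %/ 4) ^+ 2 /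
               qpoch (qq ^+ 4) (qq ^+ 4) ((n - 1) %/ 4) ^+ 2))
           (PhiQ n ^+ 2)) /\
  ((n %% 4 = 3)%N -> qcong S 0 (PhiQ n ^+ 2)).
Proof.
move=> S0; split => h4.
- have hodd : odd n by move: (modn2 n); case: (odd n) => //= ?; lia.
  have := key hn hodd; rewrite -/S0.
  have hev : ~~ odd ((n - 1) %/ 2)%N.
    apply/negP => ho; have : (((n - 1) %/ 2) %% 2 = 1)%N by rewrite modn2 ho.
    lia.
  have hh : (((n - 1) %/ 2)./2 = (n - 1) %/ 4)%N by rewrite -divn2; lia.
  rewrite /V (negbTE hev) hh.
  have -> : (qq ^+ 2) ^+ ((n - 1) %/ 4) = qq ^+ ((n - 1) %/ 2).
    by rewrite -exprM; congr (_ ^+ _); lia.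
  have -> : \prod_(j < (n - 1) %/ 4) (1 - (qq ^+ 2) ^+ (2 * j + 1)) =
            qpoch (qq ^+ 2) (qq ^+ 4) ((n - 1) %/ 4).
    apply: eq_bigr => j _; rewrite -!exprM -exprD; congr (1 - _ ^+ _); lia.
  have -> : \prod_(j < (n - 1) %/ 4) (1 - (qq ^+ 2) ^+ (2 * j + 2)) =
            qpoch (qq ^+ 4) (qq ^+ 4) ((n - 1) %/ 4).
    apply: eq_bigr => j _; rewrite -!exprM -exprD; congr (1 - _ ^+ _); lia.
  by rewrite [qpoch (qq ^+ 2) (qq ^+ 4) _ ^+ 2]expr2 !mulrA.
- have hodd : odd n by move: (modn2 n); case: (odd n) => //= ?; lia.
  have := key hn hodd; rewrite -/S0.
  have ho : odd ((n - 1) %/ 2)%N.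
    by move: (modn2 ((n - 1) %/ 2)); case: (odd _) => //= ?; lia.
  by rewrite /V ho.
Qed.
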